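(* Let $\xi$ be a model with $\xi(1)=1$ which is not of the form $\xi(t)=at^2$. Then $\xi$ has non-negative replicon eigenvalue and is pure-like or critical if and only if $$\frac{\xi''(1)}{\xi'(1)}\le y_\xi\le\frac{\xi'(1)}{\xi''(0)}.$$
   Context: A model is $\xi(t)=\sum_{p\ge2}\beta_p^2t^p$, real $\beta_p$ not all zero, with $\xi(1+\epsilon)<\infty$ for some $\epsilon>0$. For $\xi$ not of the form $at^2$, $y_\xi$ is the unique $y\in(1,\infty)$ with $\frac{\xi(1)}{\xi'(1)}=\frac1{y-1}\big(\frac{y}{y-1}\log y-1\big)$; the convention $\xi'(1)/0=+\infty$ is used if $\xi''(0)=0$. The system $\xi(1)=\frac1m(\frac1m\log\frac{c+m}c-\frac1{c+m})$, $\frac1{\xi'(1)}=c(c+m)$ has a unique solution $m,c>0$; with $\phi(t)=m(1-t)+c$ and formal conjugate $\eta(t)=\xi(1)-\int_t^1\int_0^s\phi^{-2}d\tau ds$, the replicon eigenvalue is $\eta''(0)-\xi''(0)$. With $\nu'=\xi'(1),\nu''=\xi''(1)$, $ABA=\log(\nu''/\nu')-\frac{(\nu''-\nu')(\nu''-\nu'+\nu'^2)}{\nu''\nu'^2}$; pure-like means $ABA>0$, critical means $ABA=0$. *)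

(* Defs.v *)
From Stdlib Require Import Reals Lra.
From Coquelicot Require Import Coquelicot.
Open Scope R_scope.

(* A model xi(t) = sum_{p>=2} beta_p^2 t^p is described by the sequence
   beta : nat -> R; the entries beta 0, beta 1 are ignored. *)
Definition coef (beta : nat -> R) (p : nat) : R :=
  if Nat.ltb p 2 then 0 else beta p ^ 2.

Definition xi (beta : nat -> R) (t : R) : R := PSeries (coef beta) t.

Definition is_model (beta : nat -> R) : Prop :=
  (exists p : nat, (2 <= p)%nat /\ beta p <> 0) /\
  (exists eps : R, 0 < eps /\ ex_pseries (coef beta) (1 + eps)).

Definition is_pure_quadratic (beta : nat -> R) : Prop :=
  exists a : R, forall t : R, -1 <= t <= 1 -> xi beta t = a * t ^ 2.

Definition xi' (beta : nat -> R) (t : R) : R := Derive (xi beta) t.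
Definition xi'' (beta : nat -> R) (t : R) : R := Derive_n (xi beta) 2 t.

(* the defining equation of y_xi (y_xi is its unique solution in (1,oo)) *)
Definition is_y_xi (beta : nat -> R) (y : R) : Prop :=
  1 < y /\
  xi beta 1 / xi' beta 1 = / (y - 1) * (y / (y - 1) * ln y - 1).

Definition is_mc (beta : nat -> R) (m c : R) : Prop :=
  0 < m /\ 0 < c /\
  xi beta 1 = / m * (/ m * ln ((c + m) / c) - / (c + m)) /\
  / xi' beta 1 = c * (c + m).

Definition phi (m c t : R) : R := m * (1 - t) + c.

Definition eta (beta : nat -> R) (m c t : R) : R :=
  xi beta 1 - RInt (fun s => RInt (fun tau => / (phi m c tau) ^ 2) 0 s) t 1.

Definition replicon (beta : nat -> R) (m c : R) : R :=
  Derive_n (eta beta m c) 2 0 - xi'' beta 0.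

Definition ABA (nu1 nu2 : R) : R :=
  ln (nu2 / nu1) - (nu2 - nu1) * (nu2 - nu1 + nu1 ^ 2) / (nu2 * nu1 ^ 2).

Definition pure_like (beta : nat -> R) : Prop := ABA (xi' beta 1) (xi'' beta 1) > 0.
Definition critical (beta : nat -> R) : Prop := ABA (xi' beta 1) (xi'' beta 1) = 0.

(* Main.v *)
Require Import Defs.
From Stdlib Require Import Reals Lra Lia.
From Coquelicot Require Import Coquelicot.
Open Scope R_scope.

Lemma mvt_le (f df : R -> R) a b : a < b ->
  (forall x, a <= x <= b -> is_derive f x (df x)) ->
  (forall x, a <= x <= b -> 0 <= df x) -> f a <= f b.
Proof.
  intros Hab Hd Hp.
  destruct (MVT_gen f a b df) as [c0 [Hc Heq]].
  - intros x Hx. rewrite Rmin_left in Hx by lra. rewrite Rmax_right in Hx by lra.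
    apply Hd; lra.
  - intros x Hx. rewrite Rmin_left in Hx by lra. rewrite Rmax_right in Hx by lra.
    apply continuity_pt_filterlim. apply (ex_derive_continuous (K:=R_AbsRing) (V:=R_NormedModule) f x).
    eexists; apply Hd; lra.
  - rewrite Rmin_left in Hc by lra. rewrite Rmax_right in Hc by lra.
    assert (0 <= df c0 * (b - a)) by (apply Rmult_le_pos; [apply Hp; lra| lra]).
    lra.
Qed.

Lemma mvt_lt (f df : R -> R) a b : a < b ->
  (forall x, a <= x <= b -> is_derive f x (df x)) ->
  (forall x, a <= x <= b -> 0 < df x) -> f a < f b.
Proof.
  intros Hab Hd Hp.
  destruct (MVT_gen f a b df) as [c0 [Hc Heq]].
  - intros x Hx. rewrite Rmin_left in Hx by lra. rewrite Rmax_right in Hx by lra.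
    apply Hd; lra.
  - intros x Hx. rewrite Rmin_left in Hx by lra. rewrite Rmax_right in Hx by lra.
    apply continuity_pt_filterlim. apply (ex_derive_continuous (K:=R_AbsRing) (V:=R_NormedModule) f x).
    eexists; apply Hd; lra.
  - rewrite Rmin_left in Hc by lra. rewrite Rmax_right in Hc by lra.
    assert (0 < df c0 * (b - a)) by (apply Rmult_lt_0_compat; [apply Hp; lra| lra]).
    lra.
Qed.

Lemma mvt_lt2 (f df : R -> R) a b : a < b ->
  (forall x, a <= x <= b -> is_derive f x (df x)) ->
  (forall x, a <= x <= b -> 0 <= df x) ->
  (forall x, a < x < b -> 0 < df x) -> f a < f b.
Proof.
  intros Hab Hd Hp Hs.
  set (q := a + (b - a) / 3). set (p := a + 2 * (b - a) / 3).
  assert (f a <= f q). { apply (mvt_le f df); unfold q in *; intros; try apply Hd; try apply Hp; lra. }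
  assert (f q < f p). { apply (mvt_lt f df); unfold q, p in *; intros; try apply Hd; try apply Hs; lra. }
  assert (f p <= f b). { apply (mvt_le f df); unfold p in *; intros; try apply Hd; try apply Hp; lra. }
  lra.
Qed.

Lemma ln_lt_xm1 x : 0 < x -> x <> 1 -> ln x < x - 1.
Proof.
  intros Hx H1.
  assert (ln x <> 0). { intro E. apply H1. rewrite <- (exp_ln x Hx), E. apply exp_0. }
  pose proof (exp_ineq1 _ H). rewrite exp_ln in H0 by lra. lra.
Qed.

Lemma ln_gt_1m x : 1 < x -> 1 - / x < ln x.
Proof.
  intros Hx.
  assert (0 < / x < 1). { split. apply Rinv_0_lt_compat; lra.
    rewrite <- Rinv_1. apply Rinv_lt_contravar; lra. }
  pose proof (ln_lt_xm1 (/ x) ltac:(lra) ltac:(lra)).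
  rewrite ln_Rinv in H0 by lra. lra.
Qed.

Definition G (y : R) := / (y - 1) * (y / (y - 1) * ln y - 1).

Lemma G_alt y : 1 < y -> G y = (y * ln y - y + 1) / (y - 1) ^ 2.
Proof. intros. unfold G. field. lra. Qed.

Lemma G_pos y : 1 < y -> 0 < G y.
Proof.
  intros H. rewrite G_alt by lra. apply Rdiv_lt_0_compat; [|apply pow_lt; lra].
  pose proof (ln_gt_1m y H).
  assert (y * (1 - / y) < y * ln y) by (apply Rmult_lt_compat_l; lra).
  replace (y * (1 - / y)) with (y - 1) in H1 by (field; lra). lra.
Qed.

Lemma G_lt_half y : 1 < y -> G y < / 2.
Proof.
  intros H. rewrite G_alt by lra.
  set (q := fun x => (x - 1) ^ 2 / 2 - x * ln x + x - 1).
  assert (q 1 < q y).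
  { apply (mvt_lt2 q (fun x => x - 1 - ln x)); auto.
    - intros x Hx. unfold q. auto_derive. lra. field. lra.
    - intros x Hx. destruct (Req_dec x 1). subst. rewrite ln_1. lra.
      pose proof (ln_lt_xm1 x ltac:(lra) H0). lra.
    - intros x Hx. pose proof (ln_lt_xm1 x ltac:(lra) ltac:(lra)). lra. }
  unfold q in H0. rewrite ln_1 in H0.
  apply Rmult_lt_reg_r with ((y-1)^2). apply pow_lt; lra.
  unfold Rdiv. rewrite Rmult_assoc, Rinv_l, Rmult_1_r. lra. apply pow_nonzero; lra.
Qed.

Lemma k_neg x : 1 < x -> 2 * (x - 1) - (x + 1) * ln x < 0.
Proof.
  intros H.
  set (k := fun x => - (2 * (x - 1) - (x + 1) * ln x)).
  assert (k 1 < k x).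
  { apply (mvt_lt2 k (fun x => ln x - 1 + / x)); auto.
    - intros z Hz. unfold k. auto_derive. lra. field. lra.
    - intros z Hz. destruct (Req_dec z 1). subst. rewrite ln_1. lra.
      pose proof (ln_gt_1m z ltac:(lra)). lra.
    - intros z Hz. pose proof (ln_gt_1m z ltac:(lra)). lra. }
  unfold k in H0. rewrite ln_1 in H0. lra.
Qed.

Lemma G_decr a b : 1 < a -> a < b -> G b < G a.
Proof.
  intros Ha Hab.
  assert ((fun x => - G x) a < (fun x => - G x) b).
  { apply (mvt_lt (fun x => - G x) (fun x => - ((2 * (x - 1) - (x + 1) * ln x) / (x - 1) ^ 3))); auto.
    - intros x Hx. unfold G. auto_derive. repeat split; try (intro; lra); lra. field. lra.
    - intros x Hx. pose proof (k_neg x ltac:(lra)).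
      assert (0 < (x-1)^3) by (apply pow_lt; lra).
      assert ((2 * (x - 1) - (x + 1) * ln x) / (x - 1) ^ 3 < 0).
      { assert (0 < (- (2 * (x - 1) - (x + 1) * ln x)) / (x - 1) ^ 3) by (apply Rdiv_lt_0_compat; lra).
        unfold Rdiv in *. lra. }
      lra. }
  simpl in H. lra.
Qed.

Lemma G_inj a b : 1 < a -> 1 < b -> G a = G b -> a = b.
Proof.
  intros Ha Hb E. destruct (Rtotal_order a b) as [H|[H|H]]; auto.
  - pose proof (G_decr a b Ha H). lra.
  - pose proof (G_decr b a Hb H). lra.
Qed.

Definition h (v r : R) := ln r - (r - 1) * (r - 1 + v) / (r * v).
Definition hd (v r : R) := ((r - 1) * (v - 1 - r)) * / (r ^ 2 * v).

Lemma h_der v x : 0 < v -> 0 < x -> is_derive (h v) x (hd v x).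
Proof. intros Hv Hx. unfold h, hd. auto_derive. repeat split; try (intro; nra); lra. field. lra. Qed.

Lemma hd_sign v x : 0 < v -> 0 < x -> 
  (0 <= (x - 1) * (v - 1 - x) -> 0 <= hd v x) /\
  (0 < (x - 1) * (v - 1 - x) -> 0 < hd v x) /\
  ((x - 1) * (v - 1 - x) <= 0 -> hd v x <= 0) /\
  ((x - 1) * (v - 1 - x) < 0 -> hd v x < 0).
Proof.
  intros Hv Hx. unfold hd.
  assert (0 < / (x ^ 2 * v)) by (apply Rinv_0_lt_compat; apply Rmult_lt_0_compat; [apply pow_lt|]; lra).
  repeat split; intros; nra.
Qed.

Lemma h1 v : 0 < v -> h v 1 = 0.
Proof. intros. unfold h. rewrite ln_1. field. lra. Qed.

Lemma h_char v y r : 2 < v -> 1 < y -> h v y = 0 -> 0 < r -> (0 <= h v r <-> r <= y).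
Proof.
  intros Hv Hy Hhy Hr.
  pose proof (h1 v ltac:(lra)) as H1.
  assert (Hder : forall x, 0 < x -> is_derive (h v) x (hd v x)) by (intros; apply h_der; lra).
  assert (Hdern : forall x, 0 < x -> is_derive (fun z => - h v z) x (- hd v x)).
  { intros. apply (is_derive_opp (h v)). auto. }
  assert (Hyb : v - 1 < y).
  { destruct (Rlt_or_le (v - 1) y) as [|Hle]; auto. exfalso.
    assert (h v 1 < h v y).
    { apply (mvt_lt2 (h v) (hd v)); auto; intros x Hx.
      - apply Hder; lra.
      - apply (hd_sign v x); try lra. nra.
      - apply (hd_sign v x); try lra. nra. }
    lra. }
  destruct (Rle_or_lt r 1) as [Hr1|Hr1].
  - split; intros; [lra|].
    destruct (Req_dec r 1). subst; lra.
    assert (- h v r <= - h v 1).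
    { apply (mvt_le (fun z => - h v z) (fun z => - hd v z)); try lra; intros x Hx.
      - apply Hdern; lra.
      - assert (hd v x <= 0) by (apply (hd_sign v x); try lra; nra). lra. }
    lra.
  - destruct (Rle_or_lt r (v - 1)) as [Hrb|Hrb].
    + split; intros; [lra|].
      assert (h v 1 <= h v r).
      { apply (mvt_le (h v) (hd v)); try lra; intros x Hx.
        - apply Hder; lra.
        - apply (hd_sign v x); try lra; nra. }
      lra.
    + split; intros Hc.
      * destruct (Rle_or_lt r y) as [|Hry]; auto. exfalso.
        assert (- h v y < - h v r).
        { apply (mvt_lt (fun z => - h v z) (fun z => - hd v z)); try lra; intros x Hx.
          - apply Hdern; lra.
          - assert (hd v x < 0) by (apply (hd_sign v x); try lra; nra). lra. }
        lra.
      * destruct (Req_dec r y). subst; lra.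
        assert (- h v r <= - h v y).
        { apply (mvt_le (fun z => - h v z) (fun z => - hd v z)); try lra; intros x Hx.
          - apply Hdern; lra.
          - assert (hd v x <= 0) by (apply (hd_sign v x); try lra; nra). lra. }
        lra.
Qed.

Lemma eta_dd (m c K : R) : 0 < m -> 0 < c ->
  Derive_n (fun t => K - RInt (fun s => RInt (fun tau => / (m * (1 - tau) + c) ^ 2) 0 s) t 1) 2 0
  = / (m + c) ^ 2.
Proof.
  intros Hm Hc.
  set (q := fun tau => / (m * (1 - tau) + c) ^ 2).
  set (D := 1 + c / m).
  assert (HD1 : 1 < D) by (unfold D; assert (0 < c/m) by (apply Rdiv_lt_0_compat; lra); lra).
  assert (Hphi : forall t, t < D -> 0 < m * (1 - t) + c).
  { intros t Ht. unfold D in Ht. assert (t - 1 < c / m) by lra.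
    apply (Rmult_lt_compat_l m) in H; auto. replace (m * (c / m)) with c in H by (field; lra). nra. }
  assert (Hq : forall t, t < D -> continuous q t).
  { intros t Ht. apply (ex_derive_continuous (K:=R_AbsRing) (V:=R_NormedModule) q t).
    unfold q. auto_derive. pose proof (Hphi t Ht). intro; nra. }
  set (F := fun s => RInt q 0 s).
  assert (HexF : forall a b, a < D -> b < D -> ex_RInt q a b).
  { intros a b Ha Hb. apply (ex_RInt_continuous (V:=R_CompleteNormedModule)). intros z Hz. apply Hq.
    destruct (Rle_dec a b). rewrite Rmax_right in Hz; lra. rewrite Rmax_left in Hz; lra. }
  assert (HdF : forall s, s < D -> is_derive F s (q s)).
  { intros s Hs. apply (is_derive_RInt q F 0 s); [| apply Hq; auto].
    apply (filter_imp (fun u => u < D)); [| apply (open_lt D); auto].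
    intros u Hu. apply (RInt_correct (V:=R_CompleteNormedModule)). apply HexF; lra. }
  assert (HcF : forall s, s < D -> continuous F s).
  { intros s Hs. apply (ex_derive_continuous (K:=R_AbsRing) (V:=R_NormedModule) F s).
    eexists. apply HdF; auto. }
  assert (Hde : forall t, t < D -> Derive (fun t => K - RInt F t 1) t = F t).
  { intros t Ht. apply is_derive_unique.
    replace (F t) with (0 - opp (F t)) by (unfold opp; simpl; ring).
    apply (is_derive_minus (fun _ => K) (fun t => RInt F t 1)).
    apply (is_derive_const (K:=R_AbsRing) (V:=R_NormedModule)).
    apply (is_derive_RInt' F (fun t => RInt F t 1) t 1); [| apply HcF; auto].
    apply (filter_imp (fun u => u < D)); [| apply (open_lt D); auto].
    intros u Hu. apply (RInt_correct (V:=R_CompleteNormedModule)). apply (ex_RInt_continuous (V:=R_CompleteNormedModule)). intros z Hz. apply HcF.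
    destruct (Rle_dec u 1). rewrite Rmax_right in Hz; lra. rewrite Rmax_left in Hz; lra. }
  change (Derive (Derive (fun t => K - RInt F t 1)) 0 = / (m + c) ^ 2).
  rewrite (Derive_ext_loc _ F).
  - rewrite (is_derive_unique F 0 (q 0)). unfold q. f_equal. f_equal. ring.
    apply HdF. lra.
  - apply (filter_imp (fun u => u < D)); [| apply (open_lt D); lra].
    intros u Hu. apply Hde; auto.
Qed.

Lemma term_le_Series (a : nat -> R) N : (forall n, 0 <= a n) -> ex_series a -> a N <= Series a.
Proof.
  intros Hp Hex.
  rewrite (Series_incr_n a (S N)); [| lia | auto]. change (Init.Nat.pred (S N)) with N.
  assert (0 <= Series (fun k => a (S N + k)%nat)).
  { assert (Series (fun _ : nat => 0) = 0).
    { rewrite (Series_ext (fun _ => 0) (fun n : nat => 0 * 0)) by (intros; ring).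
      rewrite (Series_scal_l 0 (fun _ => 0)). ring. }
    rewrite <- H. apply Series_le. intros; split; [lra| apply Hp].
    apply ex_series_incr_n. auto. }
  assert (a N <= sum_f_R0 a N).
  { destruct N. simpl. lra.
    simpl. pose proof (cond_pos_sum a N Hp). pose proof (Hp (S N)). lra. }
  lra.
Qed.

Lemma coef_nonneg beta n : 0 <= coef beta n.
Proof. unfold coef. destruct (Nat.ltb n 2). lra. apply pow2_ge_0. Qed.

Lemma radius beta : is_model beta -> Rbar_lt 1 (CV_radius (coef beta)).
Proof.
  intros [_ [eps [He Hex]]].
  assert (Hex' : ex_series (fun k => coef beta k * (1 + eps) ^ k)).
  { eapply ex_series_ext; [| exact Hex]. intros k. simpl.
    unfold scal; simpl. unfold mult; simpl. rewrite pow_n_pow. ring. }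
  destruct (CV_radius_bounded (coef beta)) as [Hub _].
  assert (Rbar_le (1 + eps) (CV_radius (coef beta))).
  { apply Hub. exists (Series (fun k => coef beta k * (1 + eps) ^ k)).
    intros n. rewrite Rabs_right.
    apply (term_le_Series (fun k => coef beta k * (1 + eps) ^ k) n); auto.
    intros k. apply Rmult_le_pos. apply coef_nonneg. apply pow_le; lra.
    apply Rle_ge, Rmult_le_pos. apply coef_nonneg. apply pow_le; lra. }
  destruct (CV_radius (coef beta)); simpl in *; auto; lra.
Qed.

Lemma xi2_0 beta : is_model beta -> xi'' beta 0 = 2 * beta 2%nat ^ 2.
Proof.
  intros Hm. unfold xi''. change (Derive_n (PSeries (coef beta)) 2 0 = 2 * beta 2%nat ^ 2).
  rewrite Derive_n_coef.
  - unfold coef. simpl. ring.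
  - pose proof (radius beta Hm). destruct (CV_radius (coef beta)); simpl in *; auto; lra.
Qed.

Lemma xi2_1_pos beta : is_model beta -> 0 < xi'' beta 1.
Proof.
  intros Hm. pose proof (radius beta Hm) as Hr.
  assert (Hr' : Rbar_lt (Rabs 1) (CV_radius (coef beta))) by (rewrite Rabs_R1; auto).
  unfold xi''. change (0 < Derive_n (PSeries (coef beta)) 2 1).
  rewrite Derive_n_PSeries by auto.
  destruct Hm as [[p [Hp Hbp]] _].
  assert (Hex : ex_pseries (PS_derive_n 2 (coef beta)) 1).
  { apply CV_radius_inside. rewrite CV_radius_derive_n. auto. }
  assert (Hnn : forall k, 0 <= PS_derive_n 2 (coef beta) k * 1 ^ k).
  { intros k. rewrite pow1, Rmult_1_r. unfold PS_derive_n.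
    apply Rmult_le_pos; [| apply coef_nonneg].
    apply Rmult_le_pos; [apply pos_INR|]. left; apply Rinv_0_lt_compat, lt_0_INR, Factorial.lt_O_fact. }
  unfold PSeries.
  eapply Rlt_le_trans; [| apply (term_le_Series _ (p - 2)%nat Hnn)].
  - rewrite pow1, Rmult_1_r. unfold PS_derive_n.
    replace (p - 2 + 2)%nat with p by lia.
    apply Rmult_lt_0_compat. apply Rmult_lt_0_compat. apply lt_0_INR, Factorial.lt_O_fact.
    apply Rinv_0_lt_compat, lt_0_INR, Factorial.lt_O_fact.
    unfold coef. replace (Nat.ltb p 2) with false by (symmetry; apply Nat.ltb_ge; lia).
    apply pow2_gt_0; auto.
  - eapply ex_series_ext; [| exact Hex]. intros k. simpl.
    unfold scal; simpl. unfold mult; simpl. rewrite pow_n_pow. ring.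
Qed.

Lemma rep_equiv c m d : 0 < c -> 0 < m -> 0 <= d ->
  (0 <= / (m + c) ^ 2 - d <-> d = 0 \/ (c + m) / c <= / (c * (c + m)) / d).
Proof.
  intros Hc Hm Hd.
  destruct (Req_dec d 0) as [E|E].
  - subst. split; intros; auto. left; auto.
    assert (0 < / (m + c) ^ 2) by (apply Rinv_0_lt_compat, pow_lt; lra). lra.
  - assert (Hd' : 0 < d) by lra.
    assert (Eq : / (c * (c + m)) / d - (c + m) / c = (/ (m + c) ^ 2 - d) * ((c + m) / (c * d)))
      by (field; lra).
    assert (Hf : 0 < (c + m) / (c * d)) by (apply Rdiv_lt_0_compat; nra).
    split; intros H.
    + right. assert (0 <= (/ (m + c) ^ 2 - d) * ((c + m) / (c * d))) by (apply Rmult_le_pos; lra). lra.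
    + destruct H as [H|H]; [lra|].
      assert (0 <= (/ (m + c) ^ 2 - d) * ((c + m) / (c * d))) by lra.
      destruct (Rle_or_lt 0 (/ (m + c) ^ 2 - d)); auto.
      assert ((/ (m + c) ^ 2 - d) * ((c + m) / (c * d)) < 0).
      { assert (0 < (-(/ (m + c) ^ 2 - d)) * ((c + m) / (c * d))) by (apply Rmult_lt_0_compat; lra). lra. }
      lra.
Qed.

Theorem lemma5p6 (beta : nat -> R) (y m c : R) :
  is_model beta ->
  xi beta 1 = 1 ->
  ~ is_pure_quadratic beta ->
  is_y_xi beta y ->
  is_mc beta m c ->
  ((0 <= replicon beta m c /\ (pure_like beta \/ critical beta)) <->
   (xi'' beta 1 / xi' beta 1 <= y /\
    (xi'' beta 0 = 0 \/ y <= xi' beta 1 / xi'' beta 0))).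
Proof.
  intros Hmod H1 _ [Hy Hyeq] [Hm [Hc [Hmc1 Hmc2]]].
  pose proof (xi2_0 beta Hmod) as Hd0.
  pose proof (xi2_1_pos beta Hmod) as Hv2.
  unfold pure_like, critical, replicon, eta, phi.
  rewrite eta_dd by auto.
  set (v := xi' beta 1) in *. set (v2 := xi'' beta 1) in *. set (d0 := xi'' beta 0) in *.
  rewrite H1 in Hyeq, Hmc1.
  assert (HGy : / v = G y) by (unfold G; rewrite <- Hyeq; unfold Rdiv; ring).
  assert (Hv : 0 < v).
  { pose proof (G_pos y Hy). rewrite <- HGy in H.
    destruct (Rtotal_order v 0) as [Hn|[Hz|Hp]]; auto.
    - pose proof (Rinv_lt_0_compat v Hn). lra.
    - rewrite Hz, Rinv_0 in H. lra. }
  assert (Hv2' : 2 < v).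
  { pose proof (G_lt_half y Hy). pose proof (G_pos y Hy).
    rewrite <- HGy in H, H0. replace v with (/ / v) by (field; lra).
    replace 2 with (/ / 2) by field. apply Rinv_lt_contravar; auto.
    apply Rmult_lt_0_compat; lra. }
  assert (HY : y = (c + m) / c).
  { apply G_inj; auto.
    - apply (Rmult_lt_reg_r c); auto. unfold Rdiv. rewrite Rmult_assoc, Rinv_l; lra.
    - rewrite <- HGy, Hmc2. unfold G.
      assert (HL : ln ((c + m) / c) = m * m + m / (c + m)).
      { set (L := ln ((c + m) / c)) in *.
        assert (E : L = m * m * (/ m * (/ m * L - / (c + m))) + m / (c + m)) by (field; lra).
        rewrite <- Hmc1 in E. lra. }
      replace ((c + m) / c - 1) with (m / c) by (field; lra).
      rewrite HL. field. repeat split; lra. }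
  assert (Hd0nn : 0 <= d0) by (rewrite Hd0; nra).
  assert (HABA : ABA v v2 = h v (v2 / v)).
  { unfold ABA, h. f_equal. field. lra. }
  assert (Hhy : h v y = 0).
  { unfold h.
    replace ((y - 1) * (y - 1 + v) / (y * v)) with ((y - 1) ^ 2 * / v / y + (y - 1) / y) by (field; lra).
    rewrite HGy, G_alt by lra. field. lra. }
  pose proof (h_char v y (v2 / v) Hv2' Hy Hhy ltac:(apply Rdiv_lt_0_compat; lra)) as Hch.
  rewrite HABA.
  assert (Hvc : v = / (c * (c + m))) by (rewrite <- Hmc2; field; lra).
  pose proof (rep_equiv c m d0 Hc Hm Hd0nn) as Hrep.
  rewrite <- HY, <- Hvc in Hrep.
  split.
  - intros [Hr Hp]. split.
    + apply Hch. destruct Hp; lra.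
    + apply Hrep; auto.
  - intros [Ha Hb]. split.
    + apply Hrep; auto.
    + apply Hch in Ha. destruct Ha; [left|right]; lra.
Qed.
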